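(* Consider the following setup. Let $K<\infty$ and, for $i=1,\ldots,K$, let $\{T^{(i)}_{n_i}\}$ be a sequence of test statistics for testing $H_0^{(i)}:\theta_i\in\Theta_0^{(i)}$ against $\theta_i\in\Theta^{(i)}\setminus\Theta_0^{(i)}$, with $p$-values $p_i=p_i^{(n_i)}$, independent under the null for all sample sizes, each with exact slope $c_i(\theta_i)\ge0$ (i.e. $-\frac{2}{n_i}\log p_i^{(n_i)}\to c_i(\theta_i)$ with probability one as $n_i\to\infty$), where $c_i(\theta_i)=0$ for $\theta_i\in\Theta_0^{(i)}$ and $c_i(\theta_i)>0$ otherwise. Let $n=\frac1K\sum_in_i$, $n_i/n\to\lambda_i>0$, $\sum_i\lambda_i=K$, and assume $\lambda_1c_1(\theta_1)\ge\cdots\ge\lambda_Kc_K(\theta_K)\ge0$ with $c_i(\theta_i)>0$ exactly for $1\le i\le\ell$. For a fixed $\tau\in(0,1]$ define $$T_{\mathrm{TFhard}}(\tau)=\sum_{i=1}^K(-2\log p_i)\,\mathrm{I}_{\{p_i\le\tau\}},\qquad T_{\mathrm{TFsoft}}(\tau)=\sum_{i=1}^K(-2\log p_i+2\log\tau)_+,$$ where $(x)_+=\max(x,0)$. Then both tests are ABO, with exact slopes $C_{\mathrm{TFhard}}(\vec\theta)=C_{\mathrm{TFsoft}}(\vec\theta)=\sum_{i=1}^\ell\lambda_ic_i(\theta_i)$.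
   Context: The exact slope of a combination test with $p$-value $p$ (computed from its null distribution, under which $p_1,\ldots,p_K$ are i.i.d. Unif$(0,1)$) is the function $C(\vec\theta)$ with $-\frac{2}{n}\log p\to C(\vec\theta)$ with probability one as $n\to\infty$. A combination test is asymptotically Bahadur optimal (ABO) if its exact slope equals $\sum_{i=1}^\ell\lambda_ic_i(\theta_i)$. *)

(* Defs.v *)
From HB Require Import structures.
From mathcomp Require Import all_boot all_order all_algebra.
From mathcomp Require Import all_classical all_reals all_analysis.
Set Implicit Arguments. Unset Strict Implicit. Unset Printing Implicit Defensive.
Import Order.TTheory GRing.Theory Num.Theory.
Import numFieldNormedType.Exports.
Local Open Scope classical_set_scope.
Local Open Scope ring_scope.

Definition pospart {R : realType} (x : R) : R := Num.max x 0.

Definition TFhard {R : realType} (K : nat) (tau : R) (q : 'I_K -> R) : R :=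
  \sum_(i < K) (if q i <= tau then - 2 * ln (q i) else 0).

Definition TFsoft {R : realType} (K : nat) (tau : R) (q : 'I_K -> R) : R :=
  \sum_(i < K) pospart (- 2 * ln (q i) + 2 * ln tau).

Definition is_unif01 {d} {T : measurableType d} {R : realType}
  (Q : probability T R) (X : {RV Q >-> R}) : Prop :=
  forall x : R, 0 <= x <= 1 -> Q [set w | X w <= x] = x%:E.

Definition mutually_independent {d} {T : measurableType d} {R : realType}
  (K : nat) (Q : probability T R) (X : 'I_K -> {RV Q >-> R}) : Prop :=
  forall A : 'I_K -> set R, (forall i, measurable (A i)) ->
    Q (\bigcap_(i in [set: 'I_K]) (X i @^-1` A i)) =
    (\prod_(i < K) Q (X i @^-1` A i))%E.

(* p-value of a combination test with statistic Tst, observed value t,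
   computed from its null distribution: under the null model (Q, U),
   U_1..U_K are i.i.d. Unif(0,1) and p = Q[ Tst(U) >= t ]. *)
Definition comb_pvalue {d} {T : measurableType d} {R : realType}
  (K : nat) (Q : probability T R) (U : 'I_K -> {RV Q >-> R})
  (Tst : ('I_K -> R) -> R) (t : R) : R :=
  fine (Q [set w | t <= Tst (fun i => U i w)]).

(* Main.v *)
Require Import Defs.
From HB Require Import structures.
From mathcomp Require Import all_boot all_order all_algebra.
From mathcomp Require Import all_classical all_reals all_analysis.
From mathcomp Require Import lra zify ring.
Import Order.TTheory GRing.Theory Num.Theory.
Import numFieldNormedType.Exports.
Local Open Scope classical_set_scope.
Local Open Scope ring_scope.

Lemma ln_le_sub1 {R : realType} {z : R} : 0 < z -> ln z <= z - 1.
Proof.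
move=> z0; have := @le_ln1Dx R (z - 1).
have -> : 1 + (z - 1) = z by lra.
by apply; lra.
Qed.

Lemma ln_le_lin {R : realType} {a y : R} : 0 < a -> 0 < y ->
  ln y <= a * y - 1 - ln a.
Proof.
move=> a0 y0; have := ln_le_sub1 (mulr_gt0 a0 y0).
rewrite lnM ?posrE // => h; lra.
Qed.

Lemma L4 (R : realType) (n s x : nat -> R) (L B D : R) :
  n @ \oo --> +oo -> (fun t => s t / n t) @ \oo --> L -> 0 <= D ->
  (\forall t \near \oo, 0 <= s t /\ `|x t - s t| <= B + D * ln (s t + 1)) ->
  (fun t => x t / n t) @ \oo --> L.
Proof.
move=> ny sL D0 H; apply/cvgrPdist_le => e e0.
pose a := e / (4 * (D + 1) * (`|L| + 1)).
have a0 : 0 < a by rewrite /a divr_gt0 // !mulr_gt0 // ltr_pwDr.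
pose C := `|B| + D * `|a - 1 - ln a|.
have C0 : 0 <= C by rewrite addr_ge0 // mulr_ge0.
move/cvgrPdist_le : sL => sL.
move/cvgryPge : ny => ny.
have e4 : 0 < e / 4 by rewrite divr_gt0.
near=> t.
have n0 : 0 < n t.
  by apply: (lt_le_trans ltr01); near: t; apply: ny.
have h1 : `|L - s t / n t| <= e / 4 by near: t; apply: sL.
have h1' : `|L - s t / n t| <= 1 by near: t; apply: sL.
have h2 : 4 * C / e <= n t by near: t; apply: ny.
have [s0 hx] : 0 <= s t /\ `|x t - s t| <= B + D * ln (s t + 1).
  by near: t; apply: H.
have hl := ln_le_lin a0 (ltr_pwDr ltr01 s0).
set r := s t / n t in h1 h1'.
have sr : s t = r * n t by rewrite /r divfK // gt_eqF.
have hC : C <= e / 4 * n t.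
  by move: h2; rewrite ler_pdivrMr // => h2; lra.
have hr : r <= `|L| + 1.
  have := ler_norm L; move: h1'; rewrite ler_norml; lra.
have hDa : D * a * (`|L| + 1) <= e / 4.
  have ha : a * (4 * (D + 1) * (`|L| + 1)) = e.
    by rewrite /a divfK // gt_eqF // !mulr_gt0 // ltr_pwDr.
  have p : 0 < a * (`|L| + 1) by rewrite mulr_gt0 // ltr_pwDr.
  nra.
have f1 : `|x t - s t| <= `|B| + D * (a * (s t + 1) - 1 - ln a).
  apply: (le_trans hx); apply: lerD; first exact: ler_norm.
  exact: ler_wpM2l.
have f2 : D * (a - 1 - ln a) <= D * `|a - 1 - ln a| by rewrite ler_wpM2l // ler_norm.
have f4 : D * a * r <= e / 4.
  apply: le_trans hDa; apply: ler_wpM2l => //; exact: mulr_ge0 D0 (ltW a0).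
have f4' : D * a * r * n t <= e / 4 * n t by rewrite ler_wpM2r // ltW.
have hxs : `|x t / n t - r| <= e / 2.
  have ni : 0 < (n t)^-1 by rewrite invr_gt0.
  rewrite /r -mulrBl normrM (gtr0_norm ni) ler_pdivrMr //.
  rewrite sr in f1 *; rewrite /C in hC; lra.
have := ler_distD (s t / n t) L (x t / n t).
rewrite -/r distrC in hxs; lra.
Unshelve. all: by end_near. Qed.

Lemma meas_ge {d} {T : measurableType d} {R : realType} (F : T -> R) (t : R) :
  measurable_fun setT F -> measurable [set w | t <= F w].
Proof.
move=> mF; have := mF measurableT `[t, +oo[%classic (measurable_itv _).
rewrite setTI; congr measurable; apply/seteqP; split => w /=;
  by rewrite in_itv /= andbT.
Qed.

Lemma meas_le {d} {T : measurableType d} {R : realType} (F : T -> R) (t : R) :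
  measurable_fun setT F -> measurable [set w | F w <= t].
Proof.
move=> mF; have := mF measurableT `]-oo, t]%classic (measurable_itv _).
rewrite setTI; congr measurable; apply/seteqP; split => w /=;
  by rewrite in_itv /=.
Qed.

Lemma meas_sumU {d} {T : measurableType d} {R : realType} (K : nat)
  (Q : probability T R) (U : 'I_K -> {RV Q >-> R}) (g : R -> R) :
  measurable_fun setT g -> measurable_fun setT (fun w => \sum_(i < K) g (U i w)).
Proof.
move=> mg; apply: measurable_sum => i.
exact: (measurableT_comp mg (measurable_funP (U i))).
Qed.

Lemma lower_bd {d} {T : measurableType d} {R : realType} (K : nat)
  (Q : probability T R) (U : 'I_K -> {RV Q >-> R}) (g : R -> R) (t x : R)
  (i0 : 'I_K) :
  is_unif01 (U i0) -> measurable_fun setT g -> (forall u, 0 <= g u) ->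
  0 < x <= 1 -> (forall u, 0 < u <= x -> t <= g u) ->
  (x%:E <= Q [set w | (t <= \sum_(i < K) g (U i w))%R])%E.
Proof.
move=> hU mg g0 /andP[x0 x1] hg.
set E := [set w | _].
have mE : measurable E by apply: meas_ge; exact: meas_sumU.
have mA : measurable [set w | U i0 w <= x] by apply: meas_le.
have mZ : measurable [set w | U i0 w <= 0] by apply: meas_le.
rewrite -(hU x); last by rewrite (ltW x0).
apply: (@le_trans _ _ (Q ([set w | U i0 w <= 0] `|` E))).
  apply: le_measure; rewrite ?inE //; first exact: measurableU.
  move=> w /= hw; have [w0|w0] := leP (U i0 w) 0; first by left.
  right; rewrite /E /= (bigD1 i0) //=; apply: le_trans (hg (U i0 w) _) _.
    by rewrite w0; exact: hw.
  by rewrite lerDl sumr_ge0.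
apply: le_trans (measureU2 _ _ _) _ => //.
have hZ : (Q [set w | (U i0 w <= 0)%R] <= 0)%E by rewrite hU // lexx ler01.
by apply: le_trans (leeD2r _ hZ) _; rewrite add0e.
Qed.

Definition hterm {R : realType} (tau u : R) : R :=
  if u <= tau then - 2 * ln u else 0.

Lemma minn_sum (I : Type) (r : seq I) (a : I -> nat) (M : nat) :
  (minn (\sum_(i <- r) a i) M <= \sum_(i <- r) minn (a i) M)%N.
Proof.
elim/big_rec2: _ => [|i y1 y2 _ IH]; first by rewrite min0n.
lia.
Qed.

Lemma sub_big {d} {T : measurableType d} {R : realType} (Q : probability T R)
  (I : Type) (s : seq I) (P : pred I) (B : I -> set T) :
  (forall k, measurable (B k)) ->
  (Q (\big[setU/set0]_(k <- s | P k) B k) <= \sum_(k <- s | P k) Q (B k))%E.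
Proof.
move=> mB; elim: s => [|a s IH]; first by rewrite !big_nil measure0.
rewrite !big_cons; case: ifP => _ //.
apply: le_trans (measureU2 _ _ _) _ => //.
  exact: bigsetU_measurable.
exact: leeD2l.
Qed.

Definition Aset {R : realType} (j : nat) : set R :=
  if j == 0%N then setT else `]-oo, expR (- j%:R / 2)]%classic.

Lemma QA {d} {T : measurableType d} {R : realType} (Q : probability T R)
  (X : {RV Q >-> R}) (j : nat) : is_unif01 X ->
  Q (X @^-1` Aset j) = (expR (- j%:R / 2))%:E.
Proof.
move=> hX; rewrite /Aset; case: eqP => [->|_].
  by rewrite preimage_setT probability_setT oppr0 mul0r expR0.
rewrite -hX; last by rewrite expR_ge0 expR_le1 mulr_le0_ge0 // oppr_le0.
congr (Q _); apply/seteqP; split => w /=; by rewrite in_itv.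
Qed.

Lemma QB {d} {T : measurableType d} {R : realType} (K : nat) (Q : probability T R)
  (U : 'I_K -> {RV Q >-> R}) (k : 'I_K -> nat) :
  (forall i, is_unif01 (U i)) -> mutually_independent U ->
  Q (\bigcap_(i in [set: 'I_K]) (U i @^-1` Aset (k i))) =
  (expR (- (\sum_(i < K) k i)%:R / 2))%:E.
Proof.
move=> hU hI; rewrite hI; last first.
  move=> i; rewrite /Aset; case: eqP => _ //; exact: measurable_itv.
under eq_bigr do rewrite QA //.
rewrite prodEFin -expR_sum natr_sum -sumrN mulr_suml.
by congr ((expR _)%:E); apply: eq_bigr.
Qed.

Lemma measB {d} {T : measurableType d} {R : realType} (K : nat) (Q : probability T R)
  (U : 'I_K -> {RV Q >-> R}) (k : 'I_K -> nat) :
  measurable (\bigcap_(i in [set: 'I_K]) (U i @^-1` Aset (k i))).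
Proof.
apply: fin_bigcap_measurable; first exact: finite_finset.
move=> i _; apply: measurable_funPTI; rewrite /Aset; case: eqP => _ //.
Qed.

Lemma hterm_ge0 {R : realType} (tau u : R) : tau <= 1 -> 0 <= hterm tau u.
Proof.
move=> t1; rewrite /hterm; case: ifP => // h.
have := ln_le0 (le_trans h t1); lra.
Qed.

Lemma meas_hterm {R : realType} (tau : R) : measurable_fun setT (hterm tau).
Proof.
apply: measurable_fun_ifT.
- exact: measurable_realfun.measurable_fun_ler.
- by apply: measurableT_comp => //; exact: measurable_ln.
- exact: measurable_cst.
Qed.




Lemma upper_bd {d} {T : measurableType d} {R : realType} (K : nat)
  (Q : probability T R) (U : 'I_K -> {RV Q >-> R}) (tau t : R) :
  0 < tau <= 1 -> (forall i, is_unif01 (U i)) -> mutually_independent U ->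
  (Q [set w | (t <= \sum_(i < K) hterm tau (U i w))%R] <=
   ((((Num.trunc (t - K%:R)).+1 ^ K)%:R *
      expR (- (Num.trunc (t - K%:R))%:R / 2)))%:E)%E.
Proof.
move=> /andP[tau0 tau1] hU hI.
set M := Num.trunc (t - K%:R).
pose B (k : {ffun 'I_K -> 'I_M.+1}) :=
  \bigcap_(i in [set: 'I_K]) (U i @^-1` Aset (k i)).
pose P := fun k : {ffun 'I_K -> 'I_M.+1} => (M <= \sum_(i < K) k i)%N.
have mE : measurable [set w | (t <= \sum_(i < K) hterm tau (U i w))%R].
  by apply: meas_ge; apply: meas_sumU; exact: meas_hterm.
have mBU : measurable (\big[setU/set0]_(k | P k) B k).
  by apply: bigsetU_measurable => k _; exact: measB.
apply: (@le_trans _ _ (Q (\big[setU/set0]_(k | P k) B k))).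
  apply: le_measure; rewrite ?inE //.
  move=> w /= hw.
  pose Y := fun i => hterm tau (U i w).
  have Y0 : forall i, 0 <= Y i by move=> i; exact: hterm_ge0.
  pose k0 : {ffun 'I_K -> 'I_M.+1} := [ffun i => inord (minn (Num.trunc (Y i)) M)].
  have k0E : forall i, (k0 i : nat) = minn (Num.trunc (Y i)) M.
    by move=> i; rewrite ffunE inordK // ltnS geq_minr.
  have Pk0 : P k0.
    rewrite /P; under eq_bigr do rewrite k0E.
    have hm := minn_sum _ (index_enum 'I_K) (fun i => Num.trunc (Y i)) M.
    apply: leq_trans hm; rewrite leq_min leqnn andbT.
    have [ht|ht] := leP 0 (t - K%:R).
      have hM : M%:R <= t - K%:R by rewrite truncn_le.
      have hS : t <= (\sum_(i < K) Num.trunc (Y i))%:R + K%:R.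
        apply: le_trans hw _.
        have -> : K%:R = \sum_(i < K) (1 : R) by rewrite sumr_const card_ord.
        rewrite natr_sum.
        rewrite -big_split /=; apply: ler_sum => i _.
        by rewrite natr1 ltW // truncnS_gt.
      by rewrite -(ler_nat R); lra.
    have -> : M = 0%N by apply/truncn0Pn; rewrite -ltNge; lra.
    by [].
  rewrite (bigD1 k0) //=; left.
  move=> i _ /=; rewrite k0E /Aset; case: eqP => // /eqP hj.
  rewrite /= in_itv /=.
  have h1 : (0 < Num.trunc (Y i))%N by move: hj; rewrite -lt0n; lia.
  rewrite truncn_gt0 in h1.
  have hle : U i w <= tau.
    by move: h1; rewrite /Y /hterm; case: ifP => // _; lra.
  have hY : Y i = - 2 * ln (U i w) by rewrite /Y /hterm hle.
  have U0 : 0 < U i w.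
    rewrite ltNge; apply/negP => /ln0 h; rewrite hY h in h1; lra.
  rewrite -(lnK U0) ler_expR.
  have hj1 : (minn (Num.trunc (Y i)) M)%:R <= (Num.trunc (Y i))%:R :> R.
    by rewrite ler_nat geq_minl.
  have hj2 : (Num.trunc (Y i))%:R <= Y i by rewrite truncn_le.
  rewrite hY in hj1 hj2 *; lra.
apply: le_trans (sub_big Q _ _ _ _ (fun k => measB _ _ U _)) _.
rewrite big_mkcond /=.
apply: (@le_trans _ _ (\sum_(k : {ffun 'I_K -> 'I_M.+1}) (expR (- M%:R / 2))%:E)%E).
  apply: lee_sum => k _; case: ifP => Pk; last by rewrite lee_fin expR_ge0.
  rewrite /B QB // lee_fin ler_expR.
  have : M%:R <= (\sum_(i < K) k i)%:R :> R by rewrite ler_nat.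
  lra.
rewrite sumEFin lee_fin sumr_const card_ffun !card_ord.
by rewrite mulr_natl.
Qed.

Lemma pv_bound {d} {T : measurableType d} {R : realType} (K : nat)
  (Q : probability T R) (U : 'I_K -> {RV Q >-> R})
  (Tst : ('I_K -> R) -> R) (tau s : R) :
  0 < tau <= 1 -> (forall i, is_unif01 (U i)) -> mutually_independent U ->
  0 <= s ->
  ((tau * expR (- s / 2))%:E <= Q [set w | (s <= Tst (fun i => U i w))%R])%E ->
  (Q [set w | (s <= Tst (fun i => U i w))%R] <=
     Q [set w | (s <= TFhard tau (fun i => U i w))%R])%E ->
  `|(- 2 * ln (comb_pvalue U Tst s)) - s| <=
     (K%:R + 1 - 2 * ln tau) + 2 * K%:R * ln (s + 1).
Proof.
move=> /andP[tau0 tau1] hU hI s0 hlo hup.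
have hub := le_trans hup (upper_bd _ _ U tau s (introT andP (conj tau0 tau1)) hU hI).
set M := Num.trunc (s - K%:R) in hub.
rewrite /comb_pvalue.
set q := Q _ in hlo hup hub *.
have q0 : (0 <= q)%E by exact: measure_ge0.
have qfin : q \is a fin_num by rewrite ge0_fin_numE // (le_lt_trans hub) // ltry.
have [pv hq] : exists pv, q = pv%:E by exists (fine q); rewrite fineK.
rewrite hq /= in hlo hub *.
rewrite lee_fin in hlo; rewrite lee_fin in hub.
have e0 : 0 < tau * expR (- s / 2) by rewrite mulr_gt0 // expR_gt0.
have pv0 : 0 < pv by exact: lt_le_trans hlo.
have l1 : ln tau + (- s / 2) <= ln pv.
  rewrite -(expRK (- s / 2)) -lnM ?posrE ?expR_gt0 //.
  by rewrite ler_ln // posrE.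
have Mp : (0 < (M.+1 ^ K)%:R :> R) by rewrite ltr0n expn_gt0.
have l2 : ln pv <= K%:R * ln (M.+1%:R) - M%:R / 2.
  have : ln pv <= ln ((M.+1 ^ K)%:R * expR (- M%:R / 2)).
    by rewrite ler_ln ?posrE ?mulr_gt0 ?expR_gt0.
  rewrite lnM ?posrE ?expR_gt0 // expRK natrX lnXn ?ltr0n // mulr_natl.
  lra.
have hM1 : s - K%:R < M.+1%:R by exact: truncnS_gt.
have hM2 : M%:R <= s.
  have [h|h] := leP 0 (s - K%:R).
    have := truncn_le (s - K%:R); rewrite h -/M => hh.
    have : 0 <= K%:R :> R by [].
    lra.
  have -> : M = 0%N by apply/truncn0Pn; rewrite -ltNge; lra.
  by [].
have l3 : ln (M.+1%:R) <= ln (s + 1) :> R.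
  rewrite ler_ln ?posrE ?ltr0n //; last by lra.
  by rewrite -natr1; lra.
have l4 : 0 <= ln (s + 1) by rewrite ln_ge0 //; lra.
have l5 : ln tau <= 0 by exact: ln_le0.
have K0 : 0 <= K%:R :> R by [].
have l6 : K%:R * ln (M.+1%:R) <= K%:R * ln (s + 1) by rewrite ler_wpM2l.
rewrite -natr1 in hM1.
rewrite ler_norml; apply/andP; split; nra.
Qed.

Definition sterm {R : realType} (tau u : R) : R :=
  pospart (- 2 * ln u + 2 * ln tau).

Lemma meas_sterm {R : realType} (tau : R) : measurable_fun setT (sterm tau).
Proof.
apply: measurable_realfun.measurable_maxr; last exact: measurable_cst.
apply: measurable_realfun.measurable_funD; last exact: measurable_cst.
by apply: measurableT_comp => //; exact: measurable_ln.
Qed.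

Lemma sterm_ge0 {R : realType} (tau u : R) : 0 <= sterm tau u.
Proof. by rewrite /sterm /pospart le_max lexx orbT. Qed.

Lemma sterm_le_hterm {R : realType} (tau u : R) : 0 < tau <= 1 ->
  sterm tau u <= hterm tau u.
Proof.
move=> /andP[t0 t1]; rewrite /sterm /pospart /hterm ge_max.
have lt := ln_le0 t1.
case: ifP => h.
  have := ln_le0 (le_trans h t1); lra.
rewrite lexx andbT.
have h' : tau < u by rewrite ltNge h.
have u0 : 0 < u := lt_trans t0 h'.
have : ln tau <= ln u by rewrite ler_ln ?posrE // ltW.
lra.
Qed.

Lemma xbounds {R : realType} (tau s : R) : 0 < tau <= 1 -> 0 <= s ->
  0 < tau * expR (- s / 2) <= tau.
Proof.
move=> /andP[t0 t1] s0; rewrite mulr_gt0 ?expR_gt0 //=.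
rewrite ger_pMr // expR_le1; lra.
Qed.

Lemma lower_hard {d} {T : measurableType d} {R : realType} (K : nat)
  (Q : probability T R) (U : 'I_K -> {RV Q >-> R}) (tau s : R) :
  (0 < K)%N -> 0 < tau <= 1 -> 0 <= s -> (forall i, is_unif01 (U i)) ->
  ((tau * expR (- s / 2))%:E <= Q [set w | (s <= TFhard tau (fun i => U i w))%R])%E.
Proof.
move=> K0 ht s0 hU; have /andP[t0 t1] := ht.
have /andP[x0 xt] := xbounds tau s ht s0.
apply: (@lower_bd _ _ _ _ _ _ (hterm tau) s _ (Ordinal K0)) => //.
- exact: meas_hterm.
- by move=> u; exact: hterm_ge0.
- by rewrite x0 (le_trans xt t1).
move=> u /andP[u0 ux]; rewrite /hterm (le_trans ux xt).
have : ln u <= ln (tau * expR (- s / 2)) by rewrite ler_ln ?posrE.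
rewrite lnM ?posrE ?expR_gt0 // expRK.
have := ln_le0 t1; lra.
Qed.

Lemma lower_soft {d} {T : measurableType d} {R : realType} (K : nat)
  (Q : probability T R) (U : 'I_K -> {RV Q >-> R}) (tau s : R) :
  (0 < K)%N -> 0 < tau <= 1 -> 0 <= s -> (forall i, is_unif01 (U i)) ->
  ((tau * expR (- s / 2))%:E <= Q [set w | (s <= TFsoft tau (fun i => U i w))%R])%E.
Proof.
move=> K0 ht s0 hU; have /andP[t0 t1] := ht.
have /andP[x0 xt] := xbounds tau s ht s0.
apply: (@lower_bd _ _ _ _ _ _ (sterm tau) s _ (Ordinal K0)) => //.
- exact: meas_sterm.
- by move=> u; exact: sterm_ge0.
- by rewrite x0 (le_trans xt t1).
move=> u /andP[u0 ux]; rewrite /sterm /pospart le_max; apply/orP; left.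
have : ln u <= ln (tau * expR (- s / 2)) by rewrite ler_ln ?posrE.
rewrite lnM ?posrE ?expR_gt0 // expRK.
lra.
Qed.

Lemma soft_sub_hard {d} {T : measurableType d} {R : realType} (K : nat)
  (Q : probability T R) (U : 'I_K -> {RV Q >-> R}) (tau s : R) :
  0 < tau <= 1 ->
  (Q [set w | (s <= TFsoft tau (fun i => U i w))%R] <=
     Q [set w | (s <= TFhard tau (fun i => U i w))%R])%E.
Proof.
move=> ht; apply: le_measure; rewrite ?inE.
- by apply: meas_ge; apply: (meas_sumU _ _ _ (sterm tau)); exact: meas_sterm.
- by apply: meas_ge; apply: (meas_sumU _ _ _ (hterm tau)); exact: meas_hterm.
move=> w /= h; apply: le_trans h _; apply: ler_sum => i _.
exact: sterm_le_hterm.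
Qed.

Lemma cvg_sum_seq {R : realType} (I : Type) (r : seq I) (f : I -> nat -> R)
  (l : I -> R) :
  (forall i, f i @ \oo --> l i) ->
  (fun t => \sum_(i <- r) f i t) @ \oo --> \sum_(i <- r) l i.
Proof.
move=> h; elim: r => [|a r IH].
  rewrite big_nil (_ : (fun t => _) = (fun _ => 0)); first exact: cvg_cst.
  by apply/funext => t; rewrite big_nil.
rewrite big_cons (_ : (fun t => _) = (fun t => f a t + \sum_(i <- r) f i t)).
  exact: cvgD.
by apply/funext => t; rewrite big_cons.
Qed.

Lemma nn_cvg {R : realType} (nb : nat -> R) (m : nat -> nat) (la : R) :
  0 < la -> nb @ \oo --> +oo -> (fun t => (m t)%:R / nb t) @ \oo --> la ->
  m @ \oo --> \oo.
Proof.
move=> la0 hb hr; apply/cvgnyPge => N.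
move/cvgrPdist_le : hr => hr; move/cvgryPge : hb => hb.
have la2 : 0 < la / 2 by rewrite divr_gt0.
near=> t.
have h1 : `|la - (m t)%:R / nb t| <= la / 2 by near: t; apply: hr.
have h2 : 2 * N%:R / la + 1 <= nb t by near: t; apply: hb.
have h3 : la / 2 <= (m t)%:R / nb t.
  move: h1; rewrite ler_norml; lra.
have nb0 : 0 < nb t.
  apply: lt_le_trans h2; rewrite ltr_pwDr // mulr_ge0 // ?invr_ge0 ?ltW //.
rewrite -(ler_nat R).
have e : (m t)%:R = (m t)%:R / nb t * nb t by rewrite divfK // gt_eqF.
rewrite e; apply: le_trans (ler_wpM2r (ltW nb0) h3).
have : N%:R <= la / 2 * (2 * N%:R / la).
  have la' : la != 0 by rewrite gt_eqF.
  by rewrite le_eqVlt; apply/orP; left; apply/eqP; field.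
have : 0 <= la / 2 := ltW la2.
nra.
Unshelve. all: by end_near. Qed.

Lemma hterm_close {R : realType} (tau u : R) : 0 < tau <= 1 -> 0 <= u <= 1 ->
  `|hterm tau u - (- 2 * ln u)| <= - 2 * ln tau.
Proof.
move=> /andP[t0 t1] /andP[u0 u1]; have lt := ln_le0 t1.
rewrite /hterm; case: ifP => h.
  by rewrite subrr normr0; lra.
have h' : tau < u by rewrite ltNge h.
have u0' : 0 < u := lt_trans t0 h'.
have : ln tau <= ln u by rewrite ler_ln ?posrE // ltW.
have := ln_le0 u1.
rewrite ler_norml; lra.
Qed.

Lemma sterm_close {R : realType} (tau u : R) : 0 < tau <= 1 -> 0 <= u <= 1 ->
  `|sterm tau u - (- 2 * ln u)| <= - 2 * ln tau.
Proof.
move=> /andP[t0 t1] /andP[u0 u1]; have lt := ln_le0 t1.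
rewrite /sterm /pospart maxEle.
have [h|h] := leP u 0.
  have -> : u = 0 by apply/eqP; rewrite eq_le h u0.
  rewrite ln0 // mulr0 add0r; case: ifP => _; rewrite ler_norml; lra.
have lu := ln_le0 u1.
have [h2|h2] := leP u tau.
  have : ln u <= ln tau by rewrite ler_ln ?posrE.
  case: (leP (-2 * ln u + 2 * ln tau) 0) => hh; rewrite ler_norml; lra.
have : ln tau <= ln u by rewrite ler_ln ?posrE // ltW.
case: (leP (-2 * ln u + 2 * ln tau) 0) => hh; rewrite ler_norml; lra.
Qed.

Lemma sum_close {R : realType} (K : nat) (g : R -> R) (q : 'I_K -> R) (b : R) :
  (forall i, `|g (q i) - (- 2 * ln (q i))| <= b) ->
  `|\sum_(i < K) g (q i) - \sum_(i < K) (- 2 * ln (q i))| <= K%:R * b.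
Proof.
move=> h; rewrite -sumrB; apply: le_trans (ler_norm_sum _ _ _) _.
rewrite (_ : K%:R * b = \sum_(i < K) b); last by rewrite sumr_const card_ord mulr_natl.
by apply: ler_sum => i _; exact: h.
Qed.

Theorem theorem4 (R : realType) (K : nat) (l : nat)
  (d : measure_display) (Omega : measurableType d) (P : probability Omega R)
  (p : 'I_K -> nat -> Omega -> R)
  (c : 'I_K -> R) (lam : 'I_K -> R)
  (nn : 'I_K -> nat -> nat)
  (tau : R) :
  (0 < K)%N ->
  (forall (i : 'I_K) m w, 0 <= p i m w <= 1) ->
  (forall i, 0 <= c i) ->
  (forall i : 'I_K, (i < l)%N <-> 0 < c i) ->
  (forall i, {ae P, forall w,
      (\forall m \near \oo, 0 < p i m w) /\
      (fun m : nat => - 2 / m%:R * ln (p i m w)) @ \oo --> c i}) ->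
  (forall i, 0 < lam i) ->
  \sum_(i < K) lam i = K%:R ->
  (forall i j : 'I_K, (i <= j)%N -> lam j * c j <= lam i * c i) ->
  let nbar := fun t : nat => (\sum_(i < K) (nn i t)%:R) / K%:R in
  nbar @ \oo --> +oo ->
  (forall i, (fun t => (nn i t)%:R / nbar t) @ \oo --> lam i) ->
  0 < tau <= 1 ->
  forall (d' : measure_display) (Tn : measurableType d') (Q : probability Tn R)
    (U : 'I_K -> {RV Q >-> R}),
    (forall i, is_unif01 (U i)) -> mutually_independent U ->
    {ae P, forall w,
      (fun t => - 2 / nbar t *
         ln (comb_pvalue U (TFhard tau) (TFhard tau (fun i => p i (nn i t) w))))
        @ \oo --> \sum_(i < K | (i < l)%N) lam i * c i} /\
    {ae P, forall w,
      (fun t => - 2 / nbar t *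
         ln (comb_pvalue U (TFsoft tau) (TFsoft tau (fun i => p i (nn i t) w))))
        @ \oo --> \sum_(i < K | (i < l)%N) lam i * c i}.
Proof.
move=> K0 p01 c0 hl hae lam0 sumlam hord nbar hnbar hratio htau d' Tn Q U hU hI.
have /andP[t0 t1] := htau.
set L := \sum_(i < K | (i < l)%N) lam i * c i.
have hL : L = \sum_(i < K) lam i * c i.
  rewrite /L big_mkcond; apply: eq_bigr => i _; case: ifP => // hi.
  have -> : c i = 0.
    apply/eqP; rewrite eq_le c0 andbT leNgt; apply/negP => /(hl i).
    by rewrite hi.
  by rewrite mulr0.
have hnn : forall i, nn i @ \oo --> \oo.
  by move=> i; exact: (nn_cvg _ _ _ (lam0 i) hnbar (hratio i)).
have hae' : {ae P, forall w, forall i,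
    (fun m : nat => - 2 / m%:R * ln (p i m w)) @ \oo --> c i}.
  by apply: filter_forall => i; apply: filterS (hae i) => w [_ h].
have key : forall w, (forall i,
    (fun m : nat => - 2 / m%:R * ln (p i m w)) @ \oo --> c i) ->
   (fun t => (\sum_(i < K) (- 2 * ln (p i (nn i t) w))) / nbar t) @ \oo --> L.
  move=> w hw; rewrite hL.
  rewrite (_ : (fun t => _) =
    (fun t => \sum_(i < K) (- 2 * ln (p i (nn i t) w)) / nbar t)); last first.
    by apply/funext => t; rewrite mulr_suml.
  apply: cvg_sum_seq => i.
  have h0 := cvg_comp (nn i) (fun m : nat => - 2 / m%:R * ln (p i m w)) (hnn i) (hw i).
  rewrite mulrC.
  have h1 : (fun t => (- 2 / (nn i t)%:R * ln (p i (nn i t) w)) *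
     ((nn i t)%:R / nbar t)) @ \oo --> c i * lam i.
    by apply: cvgM; [exact: h0|exact: hratio i].
  apply: cvg_trans h1; apply: near_eq_cvg.
  have := hnn i; move/cvgnyPge => /(_ 1%N) hn1.
  near=> t.
  have hn : (nn i t)%:R != 0 :> R.
    by rewrite pnatr_eq0 -lt0n; near: t; exact: hn1.
  rewrite /=; rewrite mulrAC -!mulrA; congr (_ * _).
  by rewrite [RHS]mulrC mulrA mulVf // mul1r.
have S0 : forall w t, 0 <= \sum_(i < K) (- 2 * ln (p i (nn i t) w)).
  move=> w t; apply: sumr_ge0 => i _.
  have /andP[_ h] := p01 i (nn i t) w; have := ln_le0 h; lra.
have pq : forall w t (i : 'I_K), 0 <= p i (nn i t) w <= 1 by move=> *; exact: p01.
split; apply: filterS hae' => w hw.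
- pose sh t := TFhard tau (fun i => p i (nn i t) w).
  have sh0 : forall t, 0 <= sh t.
    by move=> t; apply: sumr_ge0 => i _; exact: hterm_ge0.
  have hsh : (fun t => sh t / nbar t) @ \oo --> L.
    apply: (@L4 R nbar _ sh L (K%:R * (- 2 * ln tau)) 0 hnbar (key w hw)) => //.
    near=> t; split; first exact: S0.
    rewrite mul0r addr0.
    by apply: (sum_close K (hterm tau)) => i; exact: hterm_close.
  rewrite (_ : (fun t => _) =
    (fun t => (- 2 * ln (comb_pvalue U (TFhard tau) (sh t))) / nbar t)); last first.
    by apply/funext => t; rewrite mulrAC.
  apply: (@L4 R nbar sh _ L (K%:R + 1 - 2 * ln tau) (2 * K%:R) hnbar hsh) => //.
  near=> t; split; first exact: sh0.
  apply: pv_bound => //; first exact: lower_hard.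
- pose sh t := TFsoft tau (fun i => p i (nn i t) w).
  have sh0 : forall t, 0 <= sh t.
    by move=> t; apply: sumr_ge0 => i _; exact: sterm_ge0.
  have hsh : (fun t => sh t / nbar t) @ \oo --> L.
    apply: (@L4 R nbar _ sh L (K%:R * (- 2 * ln tau)) 0 hnbar (key w hw)) => //.
    near=> t; split; first exact: S0.
    rewrite mul0r addr0.
    by apply: (sum_close K (sterm tau)) => i; exact: sterm_close.
  rewrite (_ : (fun t => _) =
    (fun t => (- 2 * ln (comb_pvalue U (TFsoft tau) (sh t))) / nbar t)); last first.
    by apply/funext => t; rewrite mulrAC.
  apply: (@L4 R nbar sh _ L (K%:R + 1 - 2 * ln tau) (2 * K%:R) hnbar hsh) => //.
  near=> t; split; first exact: sh0.
  apply: pv_bound => //; first exact: lower_soft.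
  exact: soft_sub_hard.
Unshelve. all: by end_near. Qed.
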